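(* Let $X$ be a $d$-space such that ${\downarrow}(C\cap K)$ is closed for every nonempty closed set $C\neq X$ and every $K\in K(X)$. Then $X$ is $S^{\ast}$-well-filtered.
   Context: All spaces are $T_0$. The specialization order of $X$ is given by $x\le y$ iff $x\in cl(\{y\})$; ${\uparrow},{\downarrow}$ are taken with respect to it; a subset is saturated if it is an upper set in the specialization order. A $d$-space is a $T_0$-space that is a dcpo in its specialization order and whose open sets are all Scott open with respect to that order. $K(X)$ denotes the set of all nonempty compact saturated subsets of $X$; a family in $K(X)$ is filtered if any two members contain a common member. $X$ is $S^{\ast}$-well-filtered if for every filtered family $\{K_i\mid i\in I\}\subseteq K(X)$, every $G\in K(X)$ and every nonempty open $U$, $\bigcap_{i\in I}K_i\cap G\subseteq U$ implies $K_i\cap G\subseteq U$ for some $i$. *)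

(* Defs.v *)
From HB Require Import structures.
From mathcomp Require Import all_boot all_order.
From mathcomp Require Import all_classical all_reals all_analysis.
Set Implicit Arguments. Unset Strict Implicit. Unset Printing Implicit Defensive.
Local Open Scope classical_set_scope.

Section Defs.
Variable T : topologicalType.

Definition spec_le (x y : T) : Prop := closure [set y] x.

Definition upset (A : set T) : set T := [set y | exists2 x, A x & spec_le x y].
Definition downset (A : set T) : set T := [set x | exists2 y, A y & spec_le x y].

Definition saturated (A : set T) : Prop :=
  forall x y, A x -> spec_le x y -> A y.

Definition KX (K : set T) : Prop := K !=set0 /\ compact K /\ saturated K.

Definition directed (D : set T) : Prop :=
  D !=set0 /\ forall a b, D a -> D b -> exists2 c, D c & spec_le a c /\ spec_le b c.

Definition is_sup (D : set T) (s : T) : Prop :=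
  (forall d, D d -> spec_le d s) /\
  (forall u, (forall d, D d -> spec_le d u) -> spec_le s u).

Definition scott_open (U : set T) : Prop :=
  saturated U /\
  forall D s, directed D -> is_sup D s -> U s -> exists2 d, D d & U d.

Definition d_space : Prop :=
  kolmogorov_space T /\
  (forall D, directed D -> exists s, is_sup D s) /\
  (forall U, open U -> scott_open U).

Definition filtered_KX (F : set (set T)) : Prop :=
  F !=set0 /\ (forall K, F K -> KX K) /\
  forall A B, F A -> F B -> exists2 C, F C & C `<=` A `&` B.

Definition S_star_well_filtered : Prop :=
  forall (F : set (set T)) (G U : set T),
    filtered_KX F -> KX G -> open U -> U !=set0 ->
    \bigcap_(K in F) K `&` G `<=` U ->
    exists2 K, F K & K `&` G `<=` U.
End Defs.

(* Main.v *)
Require Import Defs.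
From mathcomp Require Import all_boot all_order.
From mathcomp Require Import all_classical all_reals all_analysis.
Local Open Scope classical_set_scope.

Section H.
Variable T : topologicalType.

Lemma spec_refl (x : T) : spec_le x x.
Proof. exact: subset_closure. Qed.

Lemma closed_down (C : set T) x y : closed C -> C y -> spec_le x y -> C x.
Proof.
move=> cC Cy hxy; apply: cC; apply: (closureS _ hxy) => z ->. done.
Qed.

Lemma spec_trans (x y z : T) : spec_le x y -> spec_le y z -> spec_le x z.
Proof. move=> hxy hyz; have := @closed_down (closure [set z]) x y (@closed_closure T _) hyz hxy. exact. Qed.

Lemma open_up (U : set T) x y : open U -> U x -> spec_le x y -> U y.
Proof.
move=> oU Ux hxy; have [z [-> //]] := hxy U (open_nbhs_nbhs (conj oU Ux)).
Qed.

Lemma closed_dsup (A : set T) D s : (forall U : set T, open U -> scott_open U) ->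
  closed A -> directed D -> D `<=` A -> is_sup D s -> A s.
Proof.
move=> sc cA dD DA sup; apply: contrapT => nAs.
have [_ /(_ D s dD sup nAs) [d Dd]] := sc _ (closed_openC cA).
by apply; apply: DA.
Qed.

Lemma chain_meet (K B : set T) (Fv : set (set T)) : compact K -> closed B ->
  (forall V, Fv V -> closed (B `&` ~` V)) -> total_on Fv subset ->
  (forall V, Fv V -> (B `&` ~` V `&` K) !=set0) -> (B `&` K) !=set0 ->
  (B `&` ~` (\bigcup_(V in Fv) V) `&` K) !=set0.
Proof.
move=> cK cB cF tot ne neBK.
pose D := [set V : set T | V = set0 \/ Fv V].
pose f := fun V : set T => B `&` ~` V `&` K.
have ne' : forall V, D V -> f V !=set0.
  move=> V [->|/ne //]; by rewrite /f setC0 setIT.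
have FF : Filter (filter_from D f).
  apply: filter_from_filter; first by exists set0; left.
  move=> V1 V2 D1 D2.
  have sub0 : forall V, f V `<=` f set0.
    by move=> V x [[Bx _] Kx]; split=> //; split.
  case: D1 => [E1|F1].
    exists V2 => //; rewrite E1 => x fx; exact: (conj (sub0 _ _ fx) fx).
  case: D2 => [E2|F2].
    exists V1 => //; first by right. 
    rewrite E2 => x fx; exact: (conj fx (sub0 _ _ fx)).
  have [h|h] := tot _ _ F1 F2.
  - exists V2; first by right.
    move=> x [[Bx nV] Kx]; refine (conj (conj (conj Bx _) Kx) (conj (conj Bx nV) Kx)).
    by move=> /h.
  - exists V1; first by right.
    move=> x [[Bx nV] Kx]; refine (conj (conj (conj Bx nV) Kx) (conj (conj Bx _) Kx)).
    by move=> /h.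
have PF := filter_from_proper FF ne'.
have FK : filter_from D f K by exists set0; [left|move=> x []].
have [p [Kp]] := cK _ PF FK; rewrite clusterE => clp.
have inV : forall V, D V -> (B `&` ~` V) p.
  move=> V DV; have cl := clp (f V) (ex_intro2 _ _ V DV (fun x h => h)).
  have cBV : closed (B `&` ~` V).
    by case: DV => [->|/cF //]; rewrite setC0 setIT.
  apply: cBV; apply: (closureS _ cl) => x [] //.
exists p; split=> //; split; first by case: (inV set0 (or_introl erefl)).
by move=> [V FV Vp]; case: (inV V (or_intror FV)).
Qed.

End H.

Theorem mainTheorem11 (T : topologicalType) :
  d_space T ->
  (forall (C K : set T), closed C -> C !=set0 -> C <> setT -> KX K ->
     closed (downset (C `&` K))) ->
  S_star_well_filtered T.
Proof.
move=> [T0 [dcpo sc]] H F G U [Fne [FK Ffilt]] KG oU Une Hsub.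
apply: contrapT => Hno.
have Hx : forall K, F K -> exists x, K x /\ G x /\ ~ U x.
  move=> K FK0; apply: contrapT => hn; apply: Hno; exists K => // x [Kx Gx].
  by apply: contrapT => nUx; apply: hn; exists x.
pose C := ~` U. pose B := downset (C `&` G).
have cC : closed C := open_closedC oU.
have [K0 FK0] := Fne.
have [x0 [K0x0 [Gx0 nUx0]]] := Hx K0 FK0.
have CT : C <> setT.
  move=> e; have [u Uu] := Une; have : C u by rewrite e.
  by [].
have cB : closed B by apply: H => //; exists x0.
have BU : forall x, B x -> ~ U x.
  by move=> x [g [Cg Gg] hxg] Ux; apply: Cg; exact: open_up oU Ux hxg.
have BT : B <> setT.
  move=> e; have [u Uu] := Une; have : B u by rewrite e.
  by move=> /BU.
have inB : forall x, C x -> G x -> B x.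
  by move=> x Cx Gx; exists x => //; exact: spec_refl.
pose P V := closed (B `&` ~` V) /\ forall K, F K -> (B `&` ~` V `&` K) !=set0.
have [V [[cA neA] maxV]] : exists V, P V /\ forall W, V `<` W -> ~ P W.
  apply: Zorn_bigcup => Fv FvP tot; split.
    move=> p clp; split.
      by apply: cB; apply: (closureS _ clp) => x [].
    move=> [V FvV Vp].
    have sub : B `&` ~` (\bigcup_(V in Fv) V) `<=` B `&` ~` V.
      by move=> x [Bx nU]; split=> // Vx; apply: nU; exists V.
    by have [_] := (FvP V FvV).1 p (closureS sub clp).
  move=> K FKK; have [_ [cK _]] := FK K FKK.
  apply: chain_meet cK cB (fun V h => (FvP V h).1) tot (fun V h => (FvP V h).2 K FKK) _.
  have [x [Kx [Gx nUx]]] := Hx K FKK; exists x; split=> //; exact: inB.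
pose A := B `&` ~` V.
have AB : A `<=` B by move=> x [].
have minA : forall A', closed A' -> A' `<=` A ->
    (forall K, F K -> (A' `&` K) !=set0) -> A `<=` A'.
  move=> A' cA' sA' neA'.
  have eq : B `&` ~` (~` A') = A'.
    rewrite setCK; apply/seteqP; split=> [x [] //|x A'x]; split=> //.
    exact: AB (sA' _ A'x).
  have PW : P (~` A') by split; rewrite eq.
  have WV : ~` A' `<=` V.
    apply: contrapT => nWV; apply: (maxV (~` A')) => //; split=> //.
    by move=> x Vx A'x; have [_] := sA' _ A'x.
  move=> x [Bx nVx]; apply: contrapT => nA'x; exact: nVx (WV _ nA'x).
have neA0 : A !=set0 by have [x [[]]] := neA K0 FK0; exists x.
have AT : A <> setT.
  by move=> e; apply: BT; apply/seteqP; split=> // x _; apply: AB; rewrite e.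
have down : forall K, F K -> A `<=` downset (A `&` K).
  move=> K FKK; apply: minA.
  - exact: H cA neA0 AT (FK K FKK).
  - by move=> x [y [Ay _] hxy]; exact: closed_down cA Ay hxy.
  - move=> K' FK'; have [K'' FK'' sK''] := Ffilt _ _ FKK FK'.
    have [x [Ax K''x]] := neA K'' FK''.
    have [Kx K'x] := sK'' _ K''x.
    by exists x; split=> //; exists x => //; exact: spec_refl.
have [a0 Aa0] := neA0.
pose R := fun a b : {x : T | A x} => `[< spec_le (sval a) (sval b) >].
have [[m Am] maxm] : exists t, premaximal R t.
  apply: (ZL_preorder (exist _ a0 Aa0)).
  - by move=> a; apply/asboolP; exact: spec_refl.
  - move=> a b c /asboolP hab /asboolP hbc; apply/asboolP; exact: spec_trans hab hbc.
  - move=> S tS.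
    have [[a Sa]|nS] := pselect (exists a, S a); last first.
      by exists (exist _ a0 Aa0) => a Sa; exfalso; apply: nS; exists a.
    pose D := [set sval b | b in S].
    have dD : directed D.
      split; first by exists (sval a), a.
      move=> _ _ [b Sb <-] [c Sc <-].
      have [/asboolP h|/asboolP h] := tS _ _ Sb Sc.
      + by exists (sval c); [exists c|split=> //; exact: spec_refl].
      + by exists (sval b); [exists b|split=> //; exact: spec_refl].
    have [s sups] := dcpo D dD.
    have As : A s.
      apply: closed_dsup sc cA dD _ sups.
      by move=> _ [b _ <-]; exact: (svalP b).
    exists (exist _ s As) => b Sb; apply/asboolP.
    by apply: sups.1; exists b.
have inall : forall K, F K -> K m.
  move=> K FKK; have [y [Ay Ky] hmy] := down K FKK m Am.
  have /asboolP hym : R (exist _ y Ay) (exist _ m Am).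
    by apply: maxm; apply/asboolP.
  have [_ [_ satK]] := FK K FKK.
  exact: satK _ _ Ky hym.
have [g [Cg Gg] hmg] := AB _ Am.
have Ug : U g.
  apply: Hsub; split=> //.
  move=> K FKK; have [_ [_ satK]] := FK K FKK.
  exact: satK _ _ (inall K FKK) hmg.
exact: Cg Ug.
Qed.
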